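(* Let $(\mathcal{X},\rho)$ be a totally bounded metric space and $\eta:\mathcal{X}\to\mathcal{Y}$ a function. There exists a sequence of instances $(X_n)_{n\ge0}$ in $\mathcal{X}$ on which the nearest neighbor rule is not online consistent on $\eta$ if and only if there is no positive separation between classes, i.e. \[\inf_{x,x'\in\mathcal{X}:\ \eta(x)\neq\eta(x')}\rho(x,x')=0.\]
   Context: For a deterministic sequence $(X_n)_{n\ge0}$, a nearest neighbor sequence is any $(\tilde X_n)_{n\ge1}$ with $\tilde X_n\in\arg\min_{x\in\{X_0,\dots,X_{n-1}\}}\rho(X_n,x)$. The nearest neighbor rule is online consistent on $\eta$ for the sequence if, for every such choice of nearest neighbors, $\limsup_{N\to\infty}\frac1N\sum_{n=1}^N\mathbb{1}\{\eta(X_n)\neq\eta(\tilde X_n)\}=0$. The infimum over the empty set is $+\infty$. *)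

(* Defs.v *)
From Stdlib Require Import Reals List ClassicalEpsilon.
From Coquelicot Require Import Coquelicot.
Open Scope R_scope.

Definition is_metric {X : Type} (rho : X -> X -> R) : Prop :=
  (forall x y, 0 <= rho x y) /\
  (forall x y, rho x y = 0 <-> x = y) /\
  (forall x y, rho x y = rho y x) /\
  (forall x y z, rho x z <= rho x y + rho y z).

Definition totally_bounded {X : Type} (rho : X -> X -> R) : Prop :=
  forall eps, 0 < eps -> exists l : list X, forall x, exists y, In y l /\ rho x y < eps.

Definition nn_sequence {X : Type} (rho : X -> X -> R) (Xs Xt : nat -> X) : Prop :=
  forall n, (1 <= n)%nat ->
    (exists i, (i < n)%nat /\ Xt n = Xs i) /\
    (forall i, (i < n)%nat -> rho (Xs n) (Xt n) <= rho (Xs n) (Xs i)).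

Definition mistake {X Y : Type} (eta : X -> Y) (Xs Xt : nat -> X) (n : nat) : R :=
  if excluded_middle_informative (eta (Xs n) <> eta (Xt n)) then 1 else 0.

(* average mistake rate (1/N) sum_{n=1}^N 1{...}, indexed by k = N - 1 (N >= 1). *)
Definition mistake_rate {X Y : Type} (eta : X -> Y) (Xs Xt : nat -> X) (k : nat) : R :=
  sum_f_R0 (fun i => mistake eta Xs Xt (S i)) k / INR (S k).

Definition nn_online_consistent {X Y : Type} (rho : X -> X -> R) (eta : X -> Y)
  (Xs : nat -> X) : Prop :=
  forall Xt, nn_sequence rho Xs Xt ->
    LimSup_seq (mistake_rate eta Xs Xt) = Finite 0.

(* inf_{x,x' : eta x <> eta x'} rho(x,x')  (as an Rbar; +oo for the empty set) *)
Definition class_separation {X Y : Type} (rho : X -> X -> R) (eta : X -> Y) : Rbar :=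
  Glb_Rbar (fun r => exists x x', eta x <> eta x' /\ r = rho x x').

(* Main.v *)
Require Import Defs.
From Stdlib Require Import Reals List Lia Lra Classical ClassicalEpsilon.
From Coquelicot Require Import Coquelicot.
Open Scope R_scope.

Lemma argmin_ex (g : nat -> R) (m : nat) :
  exists i, (i < S m)%nat /\ forall j, (j < S m)%nat -> g i <= g j.
Proof.
  induction m as [|m [i [Hi H]]].
  - exists 0%nat; split; [lia|]. intros j Hj; replace j with 0%nat by lia; lra.
  - destruct (Rle_dec (g i) (g (S m))).
    + exists i; split; [lia|]. intros j Hj.
      destruct (Nat.eq_dec j (S m)) as [->|]; [lra|]. apply H; lia.
    + exists (S m); split; [lia|]. intros j Hj.
      destruct (Nat.eq_dec j (S m)) as [->|]; [lra|].
      specialize (H j ltac:(lia)); lra.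
Qed.

Lemma nn_exists (X : Type) (rho : X -> X -> R) (Xs : nat -> X) :
  exists Xt, nn_sequence rho Xs Xt.
Proof.
  pose (idx := fun m => proj1_sig (constructive_indefinite_description _
                 (argmin_ex (fun i => rho (Xs (S m)) (Xs i)) m))).
  exists (fun n => match n with O => Xs O | S m => Xs (idx m) end).
  intros n Hn. destruct n as [|m]; [lia|].
  unfold idx; destruct (constructive_indefinite_description _ _) as [i [Hi H]]; simpl.
  split.
  - exists i; split; auto.
  - intros j Hj; apply H; auto.
Qed.

Lemma sum_half (f : nat -> R) :
  (forall i, 0 <= f i) -> (forall j, f (2 * j)%nat = 1) ->
  forall j, INR (S j) <= sum_f_R0 f (2 * j) /\ INR (S j) <= sum_f_R0 f (S (2 * j)).
Proof.
  intros H0 H1. induction j as [|j [IH1 IH2]].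
  - pose proof (H1 0%nat) as E. pose proof (H0 1%nat). simpl in *. lra.
  - replace (2 * S j)%nat with (S (S (2 * j))) by lia.
    pose proof (H1 (S j)) as E. replace (2 * S j)%nat with (S (S (2 * j))) in E by lia.
    pose proof (H0 (S (S (S (2*j))))). pose proof (H0 (S (2*j))).
    remember (2*j)%nat as m. simpl sum_f_R0.
    rewrite S_INR. rewrite S_INR in IH2. lra.
Qed.

Lemma odd_not_consistent (X Y : Type) (rho : X -> X -> R) (eta : X -> Y) (Xs : nat -> X) :
  (forall Xt, nn_sequence rho Xs Xt -> forall j, eta (Xs (S (2*j))) <> eta (Xt (S (2*j)))) ->
  ~ nn_online_consistent rho eta Xs.
Proof.
  intros H Hc. destruct (nn_exists X rho Xs) as [Xt HXt].
  specialize (Hc Xt HXt). specialize (H Xt HXt).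
  assert (Hs := sum_half (fun i => mistake eta Xs Xt (S i))
       ltac:(intros i; unfold mistake; destruct excluded_middle_informative; lra)
       ltac:(intros j; unfold mistake; destruct excluded_middle_informative; [lra|];
      exfalso; apply n, H)).
  assert (Hf : forall k, / 2 <= mistake_rate eta Xs Xt k).
  { intros k. unfold mistake_rate.
    assert (Hpos : 0 < INR (S k)) by (apply lt_0_INR; lia).
    apply Rle_div_r; [lra|].
    destruct (Nat.Even_or_Odd k) as [[d Hd]|[d Hd]]; subst k; destruct (Hs d) as [Ha Hb].
    - rewrite S_INR, mult_INR. rewrite S_INR in Ha. simpl INR in *. lra.
    - replace (2 * d + 1)%nat with (S (2 * d)) by lia.
      rewrite S_INR, S_INR, mult_INR. rewrite S_INR in Hb. simpl INR in *. lra. }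
  assert (Hl := LimSup_le (fun _ => / 2) (mistake_rate eta Xs Xt)).
  rewrite LimSup_seq_const, Hc in Hl. simpl in Hl.
  assert (/ 2 <= 0) by (apply Hl; exists 0%nat; intros; apply Hf). lra.
Qed.

Lemma sep_pos (X Y : Type) (rho : X -> X -> R) (eta : X -> Y) :
  is_metric rho -> class_separation rho eta <> Finite 0 ->
  exists d, 0 < d /\ forall x x', eta x <> eta x' -> d <= rho x x'.
Proof.
  intros [Hm _] Hne. unfold class_separation in Hne.
  destruct (Glb_Rbar_correct (fun r => exists x x', eta x <> eta x' /\ r = rho x x')) as [H1 H2].
  assert (H0 : Rbar_le 0 (Glb_Rbar (fun r => exists x x', eta x <> eta x' /\ r = rho x x'))).
  { apply H2. intros r [x [x' [_ ->]]]. simpl. apply Hm. }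
  revert H1 H2 H0 Hne. case (Glb_Rbar _).
  - intros r H1 _ H0 Hne. simpl in H0. assert (r <> 0) by (intro; subst; apply Hne; auto).
    exists r; split; [lra|]. intros x x' Hx. apply (H1 (rho x x')). eauto.
  - intros H1 _ _ _. exists 1; split; [lra|]. intros x x' Hx.
    exfalso. apply (H1 (rho x x')). eauto.
  - intros _ _ H0. simpl in H0. contradiction.
Qed.

Lemma sep0_pairs (X Y : Type) (rho : X -> X -> R) (eta : X -> Y) :
  class_separation rho eta = Finite 0 ->
  forall d, 0 < d -> exists a b, eta a <> eta b /\ rho a b < d.
Proof.
  intros Hs d Hd. apply NNPP; intro Hn.
  destruct (Glb_Rbar_correct (fun r => exists x x', eta x <> eta x' /\ r = rho x x')) as [H1 H2].
  unfold class_separation in Hs. rewrite Hs in H2.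
  assert (Rbar_le d 0).
  { apply H2. intros r [x [x' [Hx ->]]]. simpl.
    apply Rnot_lt_le. intro. apply Hn. eauto. }
  simpl in H. lra.
Qed.

Lemma count_sum (X Y : Type) (eta : X -> Y) (Xs Xt : nat -> X) (k : nat) :
  sum_f_R0 (fun i => mistake eta Xs Xt (S i)) k =
  INR (length (filter (fun i => if excluded_middle_informative (eta (Xs (S i)) <> eta (Xt (S i))) then true else false) (seq 0 (S k)))).
Proof.
  induction k.
  - simpl. unfold mistake. destruct excluded_middle_informative; simpl; lra.
  - rewrite seq_S, filter_app, length_app, plus_INR. simpl sum_f_R0. rewrite IHk.
    f_equal. simpl. unfold mistake. destruct excluded_middle_informative; simpl; lra.
Qed.

Lemma pos_consistent (X Y : Type) (rho : X -> X -> R) (eta : X -> Y) (d : R) :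
  is_metric rho -> totally_bounded rho -> 0 < d ->
  (forall x x', eta x <> eta x' -> d <= rho x x') ->
  forall Xs, nn_online_consistent rho eta Xs.
Proof.
  intros [Hm0 [Hm1 [Hsym Htri]]] Htb Hd Hsep Xs Xt Hnn.
  destruct (Htb (d/2) ltac:(lra)) as [l Hl].
  destruct (choice _ Hl) as [c Hc].
  set (L := INR (length l)).
  assert (Hb : forall k, mistake_rate eta Xs Xt k <= L / INR (S k)).
  { intros k. unfold mistake_rate. assert (0 < INR (S k)) by (apply lt_0_INR; lia).
    apply Rmult_le_compat_r; [left; apply Rinv_0_lt_compat; lra|].
    rewrite count_sum. unfold L. apply le_INR.
    set (F := filter _ _).
    assert (HF : NoDup F) by (apply NoDup_filter, seq_NoDup).
    rewrite <- (length_map (fun i => c (Xs (S i))) F).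
    apply NoDup_incl_length.
    - apply NoDup_map_NoDup_ForallPairs; [|exact HF].
      assert (Hmis : forall i, In i F -> eta (Xs (S i)) <> eta (Xt (S i))).
      { intros i Hi. unfold F in Hi. apply filter_In in Hi as [_ Hi].
        destruct excluded_middle_informative; congruence. }
      assert (Hw : forall i j, In i F -> In j F -> (i < j)%nat ->
                c (Xs (S i)) = c (Xs (S j)) -> False).
      { intros i j Hi Hj Hij Heq.
        destruct (Hnn (S j) ltac:(lia)) as [_ Hmin].
        specialize (Hmin (S i) ltac:(lia)).
        specialize (Hsep _ _ (Hmis j Hj)).
        destruct (Hc (Xs (S i))) as [_ Ci]. destruct (Hc (Xs (S j))) as [_ Cj].
        rewrite Heq in Ci.
        pose proof (Htri (Xs (S j)) (c (Xs (S j))) (Xs (S i))).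
        rewrite (Hsym (c (Xs (S j))) (Xs (S i))) in H0. lra. }
      intros i j Hi Hj Heq. destruct (Nat.lt_total i j) as [h|[h|h]]; auto.
      + exfalso; eauto.
      + exfalso; symmetry in Heq; eauto.
    - intros y Hy. apply in_map_iff in Hy as [i [<- _]]. apply Hc. }
  assert (Hlow : forall k, 0 <= mistake_rate eta Xs Xt k).
  { intros k. unfold mistake_rate. apply Rdiv_le_0_compat; [|apply lt_0_INR; lia].
    rewrite count_sum. apply pos_INR. }
  assert (Hup : forall e, 0 < e -> Rbar_le (LimSup_seq (mistake_rate eta Xs Xt)) e).
  { intros e He. rewrite <- (LimSup_seq_const e). apply LimSup_le.
    destruct (INR_unbounded (L / e)) as [N HN]. exists N. intros n Hn.
    eapply Rle_trans; [apply Hb|].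
    assert (0 <= L) by (apply pos_INR).
    assert (INR N <= INR n) by (apply le_INR; lia).
    assert (0 < INR (S n)) by (apply lt_0_INR; lia).
    rewrite S_INR in *. apply Rle_div_l; [lra|].
    apply Rmult_lt_compat_r with (r := e) in HN; [|lra].
    unfold Rdiv in HN. rewrite Rmult_assoc, Rinv_l in HN; [|lra]. nra. }
  assert (Hdown : Rbar_le 0 (LimSup_seq (mistake_rate eta Xs Xt))).
  { rewrite <- (LimSup_seq_const 0). apply LimSup_le. exists 0%nat; intros; apply Hlow. }
  revert Hup Hdown. case (LimSup_seq _).
  - intros r Hup Hdown. simpl in *. f_equal.
    destruct (Req_dec r 0); auto. specialize (Hup (r/2) ltac:(lra)). simpl in Hup. lra.
  - intros Hup _. specialize (Hup 1 ltac:(lra)). contradiction.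
  - intros _ H. contradiction.
Qed.

Lemma case1 (X Y : Type) (rho : X -> X -> R) (eta : X -> Y) (w : X) :
  is_metric rho ->
  (forall e, 0 < e -> exists a, eta a <> eta w /\ rho a w < e) ->
  exists Xs, ~ nn_online_consistent rho eta Xs.
Proof.
  intros [Hm0 [Hm1 [Hsym Htri]]] Hw.
  assert (Hg : forall e : R, exists a, 0 < e -> eta a <> eta w /\ rho a w < e).
  { intros e. destruct (Rlt_dec 0 e) as [h|h].
    - destruct (Hw e h) as [a Ha]; eauto.
    - exists w; intro; contradiction. }
  destruct (choice _ Hg) as [g Hgs].
  pose (A := fix A n := match n with O => g 1 | S n => g (rho (A n) w / 3) end).
  assert (HA : forall n, eta (A n) <> eta w /\ 0 < rho (A n) w).
  { assert (P : forall n, 0 < rho (A n) w -> 0 < rho (A n) w) by auto.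
    induction n.
    - destruct (Hgs 1 ltac:(lra)) as [H1 _]. change (A 0%nat) with (g 1). split; auto.
      destruct (Hm0 (g 1) w) as [h|h]; auto. symmetry in h; apply Hm1 in h.
      rewrite h in H1; contradiction.
    - destruct IHn as [_ IH]. destruct (Hgs (rho (A n) w / 3) ltac:(lra)) as [H1 _].
      change (A (S n)) with (g (rho (A n) w / 3)). split; auto.
      destruct (Hm0 (g (rho (A n) w / 3)) w) as [h|h]; auto. symmetry in h; apply Hm1 in h.
      rewrite h in H1; contradiction. }
  assert (Hdec : forall n, rho (A (S n)) w < rho (A n) w / 3).
  { intros n. destruct (HA n) as [_ h]. apply (Hgs (rho (A n) w / 3)). lra. }
  assert (Hlt : forall n i, (i < n)%nat -> 3 * rho (A n) w < rho (A i) w).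
  { induction n; intros i Hi; [lia|].
    pose proof (Hdec n). pose proof (HA n). pose proof (HA (S n)).
    destruct (Nat.eq_dec i n) as [->|]; [lra|].
    specialize (IHn i ltac:(lia)). lra. }
  exists (fun n => match n with O => w | S m => A m end).
  apply odd_not_consistent. intros Xt Hnn j.
  generalize (2 * j)%nat; intros m.
  destruct (Hnn (S m) ltac:(lia)) as [[i [Hi Heq]] Hmin].
  specialize (Hmin 0%nat ltac:(lia)). rewrite Heq in *. simpl in *.
  destruct i as [|i]; [apply HA|].
  exfalso. pose proof (Hlt m i ltac:(lia)). pose proof (HA m).
  pose proof (Htri (A i) (A m) w). rewrite (Hsym (A i) (A m)) in H1. lra.
Qed.

Lemma case2 (X Y : Type) (rho : X -> X -> R) (eta : X -> Y) :
  is_metric rho -> class_separation rho eta = Finite 0 ->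
  (forall w, exists e, 0 < e /\ forall a, eta a <> eta w -> e <= rho a w) ->
  exists Xs, ~ nn_online_consistent rho eta Xs.
Proof.
  intros [Hm0 [Hm1 [Hsym Htri]]] Hs Heps.
  destruct (choice _ Heps) as [eps Heps'].
  pose proof (sep0_pairs X Y rho eta Hs) as Hp.
  destruct (Hp 1 ltac:(lra)) as [a0 [b0 _]].
  assert (HP : forall d : R, exists p : X * X, 0 < d -> eta (fst p) <> eta (snd p) /\ rho (fst p) (snd p) < d).
  { intros d. destruct (Rlt_dec 0 d) as [h|h].
    - destruct (Hp d h) as [a [b Hab]]. exists (a, b); auto.
    - exists (a0, b0); intro; contradiction. }
  destruct (choice _ HP) as [P HPs].
  pose (step := fun t : X * X * R => let p := P (snd t / 2) in
          (fst p, snd p, Rmin (snd t) (Rmin (eps (fst p)) (eps (snd p))))).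
  pose (st := fix st k := match k with O => (fst (P 1), snd (P 1), Rmin (eps (fst (P 1))) (eps (snd (P 1))))
                              | S k => step (st k) end).
  pose (a := fun k => fst (fst (st k))). pose (b := fun k => snd (fst (st k))).
  pose (m := fun k => snd (st k)).
  assert (Hepos : forall x, 0 < eps x) by (intro x; apply Heps').
  assert (Hmpos : forall k, 0 < m k).
  { induction k; unfold m; simpl.
    - apply Rmin_pos; auto.
    - apply Rmin_pos; [exact IHk|apply Rmin_pos; auto]. }
  assert (Hlab : forall k, eta (a k) <> eta (b k)).
  { destruct k; unfold a, b; simpl.
    - apply (HPs 1); lra.
    - apply (HPs (snd (st k) / 2)). pose proof (Hmpos k). unfold m in H. lra. }
  assert (Hclose : forall k, rho (a (S k)) (b (S k)) < m k / 2).
  { intros k. unfold a, b, m; simpl. apply (HPs (snd (st k) / 2)). pose proof (Hmpos k). unfold m in H. lra. }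
  assert (Hmon : forall k, m (S k) <= m k).
  { intros k. unfold m; simpl. apply Rmin_l. }
  assert (Hme : forall k j, (j <= k)%nat -> m k <= eps (a j) /\ m k <= eps (b j)).
  { induction k; intros j Hj.
    - replace j with 0%nat by lia. unfold m, a, b; simpl. split; [apply Rmin_l|apply Rmin_r].
    - destruct (Nat.eq_dec j (S k)) as [->|].
      + unfold m, a, b; simpl. split; (eapply Rle_trans; [apply Rmin_r|]); [apply Rmin_l|apply Rmin_r].
      + destruct (IHk j ltac:(lia)). pose proof (Hmon k). split; lra. }
  exists (fun n => if Nat.even n then a (Nat.div2 n) else b (Nat.div2 n)).
  apply odd_not_consistent. intros Xt Hnn j.
  destruct (Hnn (S (2 * j)) ltac:(lia)) as [[i [Hi Heq]] Hmin].
  specialize (Hmin (2 * j)%nat ltac:(lia)).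
  rewrite Heq in *.
  assert (E1 : Nat.even (2 * j) = true) by apply Nat.even_even.
  assert (E2 : Nat.even (S (2 * j)) = false) by (rewrite Nat.even_succ, Nat.odd_mul; reflexivity).
  rewrite E1, E2, Nat.div2_succ_double, Nat.div2_double in *.
  destruct (Nat.eq_dec i (2 * j)) as [->|Hne].
  { rewrite E1, Nat.div2_double. intro h; apply (Hlab j); auto. }
  assert (Hq : exists q w, (q < j)%nat /\ w = (if Nat.even i then a (Nat.div2 i) else b (Nat.div2 i))
                /\ (w = a q \/ w = b q)).
  { destruct (Nat.Even_or_Odd i) as [[q Hq]|[q Hq]]; subst i; exists q.
    - rewrite Nat.even_even, Nat.div2_double. eexists; split; [lia|split; eauto].
    - replace (2 * q + 1)%nat with (S (2 * q)) by lia.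
      rewrite Nat.even_succ, Nat.odd_mul, Nat.div2_succ_double. simpl.
      eexists; split; [lia|split; eauto]. }
  destruct Hq as [q [w [Hqj [Hweq Hw]]]]. rewrite <- Hweq in Hmin |- *.
  destruct j as [|j']; [lia|].
  assert (Hmw : m j' <= eps w).
  { destruct (Hme j' q ltac:(lia)); destruct Hw as [->| ->]; auto. }
  pose proof (Hclose j'). pose proof (Htri (a (S j')) (b (S j')) w).
  assert (Haw : eta (a (S j')) = eta w).
  { apply NNPP; intro h. pose proof (proj2 (Heps' w) _ h). rewrite (Hsym (a (S j')) (b (S j'))) in *. lra. }
  rewrite <- Haw. intro h; apply (Hlab (S j')); auto.
Qed.

Theorem proposition1 (X Y : Type) (rho : X -> X -> R) (eta : X -> Y) :
  is_metric rho -> totally_bounded rho ->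
  ((exists Xs : nat -> X, ~ nn_online_consistent rho eta Xs) <->
   class_separation rho eta = Finite 0).
Proof.
  intros Hm Htb. split.
  - intros [Xs HXs]. apply NNPP; intro Hne.
    destruct (sep_pos X Y rho eta Hm Hne) as [d [Hd Hsep]].
    apply HXs. eapply pos_consistent; eauto.
  - intros Hs.
    destruct (classic (exists w, forall e, 0 < e -> exists a, eta a <> eta w /\ rho a w < e)) as [[w Hw]|Hn].
    + eapply case1; eauto.
    + apply case2; auto. intros w. apply NNPP; intro h. apply Hn. exists w.
      intros e He. apply NNPP; intro h2. apply h. exists e; split; auto.
      intros a' Ha'. apply Rnot_lt_le. intro. apply h2. eauto.
Qed.
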